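(* For all $1\le k\le n$ and $a\in\mathbb{N}_0$, in $A_n$ we have \[ \omega_k^a = \sum_{\ell = 1}^{k} (-1)^{a+k+\ell}\, h_{a+\ell-k}(x_\ell,\dots,x_k)\, \omega_{\ell}, \] where $h_j(x_\ell,\dots,x_k)$ is the $j$-th complete homogeneous symmetric polynomial in $x_\ell,\dots,x_k$ (zero for $j<0$).
   Context: $A_n$ is the bigraded $\mathbb{Z}$-superalgebra of operators on $R=\mathbb{Z}[x_1,\dots,x_n]\otimes\bigwedge^\bullet(\omega_1,\dots,\omega_n)$ generated by the Demazure operators and multiplication by elements of $R$; in particular it contains the (commuting, even) $x_i$ and (anticommuting, odd) $\omega_i$. Labeled elements are defined recursively by $\omega_k^0=\omega_k$, $\omega_0^a=0$, and $\omega_k^a=\omega_{k-1}^{a-1}-x_k\omega_k^{a-1}$ for $a\ge1$. *)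

(* Defs.v *)
From HB Require Import structures.
From mathcomp Require Import all_boot all_order all_algebra.
From mathcomp Require Import mpoly.
Unset Printing Implicit Defensive.
Import GRing.Theory.
Local Open Scope ring_scope.

(* The ring R = Z[x_1..x_n] (x) /\(omega_1..omega_n), as a free Z[x]-module
   with basis omega_S = omega_{s_1} ... omega_{s_m} (s_1 < ... < s_m),
   S ranging over subsets of {1..n} (here encoded as 'I_n, index i <-> i+1).
   An element is the finite function S |-> coefficient of omega_S. *)
Notation Rn n := {ffun {set 'I_n} -> {mpoly int[n]}}.

(* Variable x_k (1-based); 0 outside 1..n (never used there). *)
Definition xvar (n k : nat) : {mpoly int[n]} :=
  match k with
  | 0 => 0
  | k'.+1 => match @insub nat (fun m => m < n)%N 'I_n k' with
             | Some i => 'X_i | None => 0 end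
  end.

Definition polymul n (p : {mpoly int[n]}) (f : Rn n) : Rn n :=
  [ffun S : {set 'I_n} => p * f S].

(* Left multiplication by omega_i on R:
   omega_i * omega_T = (-1)^#{j in T | j < i} omega_{T u {i}} if i \notin T, 0 otherwise. *)
Definition omega_mul n (i : 'I_n) (f : Rn n) : Rn n :=
  [ffun S : {set 'I_n} => if i \in S then (-1) ^+ #|[set j in S | (j < i)%N]| * f (S :\ i)
             else 0].

Definition omega_op (n k : nat) : Rn n -> Rn n :=
  match k with
  | 0 => fun _ => 0
  | k'.+1 => match @insub nat (fun m => m < n)%N 'I_n k' with
             | Some i => omega_mul n i | None => fun _ => 0 end
  end.

Fixpoint labeled (n a k : nat) : Rn n -> Rn n :=
  match a with
  | 0 => omega_op n k
  | a'.+1 => fun f => match k with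
                      | 0 => 0
                      | k'.+1 => labeled n a' k' f - polymul n (xvar n k) (labeled n a' k f)
                      end
  end.

Definition hcomp (n j l k : nat) : {mpoly int[n]} :=
  \sum_(e : {ffun 'I_(k.+1 - l) -> 'I_j.+1} | (\sum_(i < k.+1 - l) (e i : nat) == j)%N)
     \prod_(i < k.+1 - l) xvar n (l + i) ^+ e i.

(* Main.v *)
Require Import Defs.
From HB Require Import structures.
From mathcomp Require Import all_boot all_order all_algebra.
From mathcomp Require Import mpoly zify.
Import GRing.Theory.
Local Open Scope ring_scope.

Section G.
Variable P : comNzRingType.
Variable y : nat -> P.

Definition G (N j m : nat) : P :=
  \sum_(e : {ffun 'I_m -> 'I_N} | (\sum_(i < m) (e i : nat) == j)%N)
     \prod_(i < m) y i ^+ e i.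

Lemma G0 N j : G N j 0 = (j == 0%N)%:R.
Proof.
rewrite /G (eq_bigl (fun _ => j == 0%N)); last by move=> e; rewrite big_ord0 eq_sym.
rewrite (eq_bigr (fun _ => 1)); last by move=> e _; rewrite big_ord0.
case: eqP => _; last by rewrite big_pred0.
by rewrite sumr_const card_ffun !card_ord expn0.
Qed.

Definition phi m N (p : 'I_N * {ffun 'I_m -> 'I_N}) : {ffun 'I_m.+1 -> 'I_N} :=
  [ffun i => if unlift ord_max i is Some i' then p.2 i' else p.1].
Definition psi m N (f : {ffun 'I_m.+1 -> 'I_N}) : 'I_N * {ffun 'I_m -> 'I_N} :=
  (f ord_max, [ffun i => f (widen_ord (leqnSn m) i)]).

Arguments phi {m N}.
Arguments psi {m N}.
Lemma unlift_widen m (i : 'I_m) : unlift ord_max (widen_ord (leqnSn m) i) = Some i.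
Proof.
have -> : widen_ord (leqnSn m) i = lift ord_max i by apply: val_inj; rewrite /= /bump leqNgt ltn_ord.
by rewrite liftK.
Qed.

Lemma phiK m N : cancel (@psi m N) (@phi m N).
Proof.
move=> f; apply/ffunP => i; rewrite ffunE /=.
case: unliftP => [j ->|->]; last by [].
by rewrite ffunE; congr (f _); apply: val_inj; rewrite /= /bump leqNgt ltn_ord.
Qed.

Lemma psiK m N : cancel (@phi m N) (@psi m N).
Proof.
move=> [t e]; rewrite /psi /phi ffunE unlift_none /=; congr pair.
by apply/ffunP => i; rewrite !ffunE unlift_widen.
Qed.

Lemma Grec N j m : (j < N)%N ->
  G N j m.+1 = \sum_(t < j.+1) y m ^+ t * G N (j - t) m.
Proof.
move=> jN.
rewrite /G (reindex (@phi m N)); last by exists (@psi m N) => x _; [apply: psiK|apply: phiK].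
have Es (p : 'I_N * {ffun 'I_m -> 'I_N}) :
  (\sum_(i < m.+1) (phi p i : nat) = \sum_(i < m) (p.2 i : nat) + p.1)%N.
  rewrite big_ord_recr /= ffunE unlift_none; congr (_ + _)%N.
  by apply: eq_bigr => i _; rewrite ffunE unlift_widen.
have Ep (p : 'I_N * {ffun 'I_m -> 'I_N}) :
  \prod_(i < m.+1) y i ^+ phi p i = (\prod_(i < m) y i ^+ p.2 i) * y m ^+ p.1.
  rewrite big_ord_recr /= ffunE unlift_none; congr (_ * _).
  by apply: eq_bigr => i _; rewrite ffunE unlift_widen.
rewrite (eq_bigl (fun p : 'I_N * {ffun 'I_m -> 'I_N} => (p.1 <= j)%N && (\sum_(i < m) (p.2 i : nat) == j - p.1)%N)); last first.
  move=> p; rewrite Es; case: (leqP p.1 j) => h /=.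
    by apply/eqP/eqP => [<-|->]; [rewrite addnK|rewrite subnK].
  by apply/negbTE; rewrite neq_ltn; apply/orP; right; apply: leq_trans h (leq_addl _ _).
rewrite (eq_bigr (fun p : 'I_N * {ffun 'I_m -> 'I_N} => y m ^+ p.1 * \prod_(i < m) y i ^+ p.2 i)); last by move=> p _; rewrite Ep mulrC.
rewrite -(pair_big_dep (fun t : 'I_N => (t <= j)%N) (fun t (e : {ffun 'I_m -> 'I_N}) => (\sum_(i < m) (e i : nat) == j - t)%N) (fun t (e : {ffun 'I_m -> 'I_N}) => y m ^+ t * \prod_(i < m) y i ^+ e i)) /=.
clear Es Ep; case: N jN => [//|N'] jN.
rewrite (big_ord_narrow_leq (_ : j <= N')%N) //.
by apply: eq_bigr => t _; rewrite /G mulr_sumr.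
Qed.

Lemma Gindep N N' j m : (j < N)%N -> (j < N')%N -> G N j m = G N' j m.
Proof.
elim: m j => [|m IH] j jN jN'; first by rewrite !G0.
rewrite !Grec //; apply: eq_bigr => t _; rewrite IH //; lia.
Qed.

Lemma G_0 N m : (0 < N)%N -> G N 0 m = 1.
Proof.
move=> N0; elim: m => [|m IH]; first by rewrite G0.
by rewrite Grec // big_ord1 expr0 mul1r IH.
Qed.

Lemma Gstep N j m : (j.+1 < N)%N -> G N j.+1 m.+1 = G N j.+1 m + y m * G N j m.+1.
Proof.
move=> jN; rewrite Grec // big_ord_recl expr0 mul1r subn0; congr (_ + _).
rewrite Grec; last lia.
rewrite mulr_sumr; apply: eq_bigr => t _.
rewrite /bump /= exprS mulrA; congr (_ * G _ _ _); lia.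
Qed.
End G.

Lemma hcompG n j l k : hcomp n j l k = @G _ (fun i => xvar n (l + i)) j.+1 j (k.+1 - l).
Proof. by []. Qed.

Lemma hcomp0 n l k : hcomp n 0 l k = 1.
Proof. by rewrite hcompG G_0. Qed.

Lemma hstep n j l k : (l <= k.+1)%N ->
  hcomp n j.+1 l k.+1 = hcomp n j.+1 l k + xvar n k.+1 * hcomp n j l k.+1.
Proof.
move=> lk; rewrite !hcompG (subSn lk) Gstep // subnKC //; congr (_ + _ * _).
by apply: Gindep.
Qed.


Definition c n a k l : {mpoly int[n]} :=
  (-1) ^+ (a + k + l) * (if (k <= a + l)%N then hcomp n (a + l - k) l k else 0).

Lemma hcomp_empty n j k : hcomp n j.+1 k.+1 k = 0.
Proof. by rewrite hcompG subnn G0. Qed.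

Lemma cstep n a k l : (l <= k.+1)%N ->
  c n a.+1 k.+1 l = c n a k l - xvar n k.+1 * c n a k.+1 l.
Proof.
move=> lk; rewrite /c.
rewrite (_ : (a.+1 + k.+1 + l = (a + k + l).+2)%N); last lia.
rewrite (_ : (a + k.+1 + l = (a + k + l).+1)%N); last lia.
rewrite !exprS !mulN1r opprK mulNr mulrN opprK mulrCA -mulrDr; congr (_ * _).
rewrite (_ : (k.+1 <= a.+1 + l)%N = (k <= a + l)%N); last lia.
rewrite (_ : (a.+1 + l - k.+1 = a + l - k)%N); last lia.
case: (ltngtP k (a + l)) => h.
- have -> : (a + l - k = (a + l - k.+1).+1)%N by lia.
  by rewrite hstep.
- by rewrite ?mulr0 ?addr0.
- by rewrite ?mulr0 ?addr0 -h subnn !hcomp0.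
Qed.

Lemma mainS n a k f S :
  labeled n a k f S = \sum_(1 <= l < k.+1) c n a k l * omega_op n l f S.
Proof.
elim: a k => [|a IH] k.
  case: k => [|k] /=; first by rewrite big_geq // ffunE.
  rewrite big_nat_recr //= big1_seq ?add0r; last first.
    move=> l /andP[_]; rewrite mem_index_iota => /andP[_ lk].
    by rewrite /c add0n leqNgt lk mulr0 mul0r.
  by rewrite /c add0n leqnn subnn hcomp0 mulr1 addnn -muln2 mulnC exprM sqrrN !expr1n mul1r.
case: k => [|k] /=; first by rewrite big_geq // ffunE.
rewrite !ffunE !IH.
rewrite [in RHS](eq_big_nat _ _ (F2 := fun l => c n a k l * omega_op n l f S -
    xvar n k.+1 * (c n a k.+1 l * omega_op n l f S))); last first.
  by move=> l /andP[_ lk]; rewrite cstep // mulrBl mulrA.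
rewrite sumrB -mulr_sumr; congr (_ - _).
rewrite [in RHS]big_nat_recr //= /c.
rewrite (_ : (k <= a + k.+1)%N); last lia.
rewrite (_ : (a + k.+1 - k = a.+1)%N); last lia.
by rewrite hcomp_empty mulr0 mul0r addr0.
Qed.

Theorem lemma2p3 (n k a : nat) (Hk : (1 <= k <= n)%N) (f : Rn n) :
  labeled n a k f =
  \sum_(1 <= l < k.+1)
     polymul n ((-1) ^+ (a + k + l) *
              (if (k <= a + l)%N then hcomp n (a + l - k) l k else 0))
             (omega_op n l f).
Proof.
apply/ffunP => S; rewrite mainS sum_ffunE; apply: eq_bigr => l _.
by rewrite ffunE.
Qed.
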